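(* Let $f\in\mathbb{N}^\mathbb{N}$ and let $h\in2^\mathbb{N}$ be of hyperimmune-free degree with $h\in P$ for some very small $\Pi^f_1$ class $P\subseteq2^\mathbb{N}$. Then every $h'\in2^\mathbb{N}$ with $h'\le_T h$ is of hyperimmune-free degree and belongs to some very small $\Pi^f_1$ class.
   Context: A tree is a subset of $2^{<\mathbb{N}}$ closed under initial segments; a $\Pi^f_1$ class is a set $P=[T]\subseteq2^\mathbb{N}$ of infinite paths through some $f$-computable tree $T$. A node $\sigma\in T$ is extendible if it has infinitely many extensions in $T$, and a branching node if $\sigma0$ and $\sigma1$ are both extendible; $\mathrm{Br}(P)=\mathrm{Br}(T)$ is the set of branching nodes (it depends only on $P$). $P$ is very small if the principal function of the set $\{|\sigma|:\sigma\in\mathrm{Br}(P)\}$ (the function $n\mapsto$ its $n$-th element in increasing order) dominates every computable function (i.e. is eventually $\ge$ it). $X$ is of hyperimmune-free degree if every function $g\le_T X$ is dominated by a computable function. *)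

(* Defs.v *)
From Stdlib Require Import Arith List.
Import ListNotations.

Definition cpair (x y : nat) : nat := (x + y) * (x + y + 1) / 2 + y.

Inductive code : Type :=
| CZero | CSucc | CId | COracle | CFst | CSnd
| CComp (c d : code)
| CPair (c d : code)
| CRec (c d : code)
| CMu (c : code).

Inductive eval (o : nat -> nat) : code -> nat -> nat -> Prop :=
| ev_zero x : eval o CZero x 0
| ev_succ x : eval o CSucc x (S x)
| ev_id x : eval o CId x x
| ev_oracle x : eval o COracle x (o x)
| ev_fst a b : eval o CFst (cpair a b) a
| ev_snd a b : eval o CSnd (cpair a b) b
| ev_comp c d x y z : eval o d x y -> eval o c y z -> eval o (CComp c d) x z
| ev_pair c d x a b : eval o c x a -> eval o d x b -> eval o (CPair c d) x (cpair a b)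
| ev_rec0 c d x y : eval o c x y -> eval o (CRec c d) (cpair x 0) y
| ev_recS c d x n y z : eval o (CRec c d) (cpair x n) y ->
    eval o d (cpair x (cpair n y)) z -> eval o (CRec c d) (cpair x (S n)) z
| ev_mu c x n : eval o c (cpair x n) 0 ->
    (forall m, m < n -> exists k, eval o c (cpair x m) (S k)) -> eval o (CMu c) x n.

Definition computable_in (o : nat -> nat) (F : nat -> nat) : Prop :=
  exists c, forall x, eval o c x (F x).

Definition computable (F : nat -> nat) : Prop := computable_in (fun _ => 0) F.

Definition chi (X : nat -> bool) : nat -> nat := fun n => if X n then 1 else 0.

Definition fun_le_T (g : nat -> nat) (X : nat -> bool) : Prop := computable_in (chi X) g.
Definition Turing_le (Y X : nat -> bool) : Prop := fun_le_T (chi Y) X.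

Definition dominates (p g : nat -> nat) : Prop := exists N, forall n, N <= n -> g n <= p n.

Definition hyperimmune_free (X : nat -> bool) : Prop :=
  forall g, fun_le_T g X -> exists q, computable q /\ dominates q g.

Definition string := list bool.

(** Bijective coding of strings by naturals. *)
Fixpoint scode (s : string) : nat :=
  match s with
  | [] => 0
  | false :: t => 2 * scode t + 1
  | true :: t => 2 * scode t + 2
  end.

Definition prefix (s t : string) : Prop := exists u, t = s ++ u.

Definition is_tree (T : string -> Prop) : Prop :=
  forall s t, prefix s t -> T t -> T s.

Definition tree_computable_in (f : nat -> nat) (T : string -> Prop) : Prop :=
  exists F, computable_in f F /\ forall s, (T s <-> F (scode s) = 1).

Definition init (X : nat -> bool) (n : nat) : string := map X (seq 0 n).

Definition path (T : string -> Prop) (X : nat -> bool) : Prop := forall n, T (init X n).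

Definition Pi01_class (f : nat -> nat) (P : (nat -> bool) -> Prop) : Prop :=
  exists T, is_tree T /\ tree_computable_in f T /\ forall X, P X <-> path T X.

(** sigma has infinitely many extensions in T *)
Definition extendible (T : string -> Prop) (s : string) : Prop :=
  T s /\ forall l : list string, exists t, T t /\ prefix s t /\ ~ In t l.

Definition branching (T : string -> Prop) (s : string) : Prop :=
  extendible T (s ++ [false]) /\ extendible T (s ++ [true]).

Definition principal_function (A : nat -> Prop) (p : nat -> nat) : Prop :=
  (forall n, p n < p (S n)) /\ (forall m, A m <-> exists n, p n = m).

(** Very small class (Br(P) = Br(T) for any tree T with [T] = P). *)
Definition very_small (P : (nat -> bool) -> Prop) : Prop :=
  exists T p, is_tree T /\ (forall X, P X <-> path T X) /\
    principal_function (fun m => exists s, branching T s /\ length s = m) p /\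
    forall g, computable g -> dominates p g.

(* Main.v *)
Require Import Defs.
From Stdlib Require Import Arith List Lia Cantor Classical ClassicalEpsilon Wf_nat.
Import ListNotations.

Definition p1 n := fst (Cantor.of_nat n).
Definition p2 n := snd (Cantor.of_nat n).

Lemma cpair_to x y : cpair x y = Cantor.to_nat (x,y).
Proof.
  unfold cpair. rewrite Cantor.to_nat_spec2.
  replace (x + y + 1) with (S (y + x)) by lia. replace (x + y) with (y + x) by lia. lia.
Qed.
Lemma p1_c a b : p1 (cpair a b) = a.
Proof. rewrite cpair_to; unfold p1; rewrite Cantor.cancel_of_to; reflexivity. Qed.
Lemma p2_c a b : p2 (cpair a b) = b.
Proof. rewrite cpair_to; unfold p2; rewrite Cantor.cancel_of_to; reflexivity. Qed.
Lemma cp_eta n : cpair (p1 n) (p2 n) = n.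
Proof. rewrite cpair_to; unfold p1,p2. destruct (Cantor.of_nat n) eqn:E; cbn [fst snd].
  rewrite <- E; apply Cantor.cancel_to_of. Qed.
Lemma cpair_inj a b a' b' : cpair a b = cpair a' b' -> a = a' /\ b = b'.
Proof. intro H. split; [rewrite <- (p1_c a b), H; apply p1_c | rewrite <- (p2_c a b), H; apply p2_c]. Qed.

Lemma ev_p1 o x : eval o CFst x (p1 x).
Proof. rewrite <- (cp_eta x) at 1. constructor. Qed.
Lemma ev_p2 o x : eval o CSnd x (p2 x).
Proof. rewrite <- (cp_eta x) at 1. constructor. Qed.

Notation C := computable_in.

Lemma C_ext o F G : (forall x, F x = G x) -> C o F -> C o G.
Proof. intros E [c Hc]. exists c. intro x. rewrite <- E. apply Hc. Qed.
Lemma C_id o : C o (fun x => x).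
Proof. exists CId. intro; constructor. Qed.
Lemma C_zero o : C o (fun _ => 0).
Proof. exists CZero. intro; constructor. Qed.
Lemma C_succ o : C o S.
Proof. exists CSucc. intro; constructor. Qed.
Lemma C_oracle o : C o o.
Proof. exists COracle. intro; constructor. Qed.
Lemma C_p1 o : C o p1.
Proof. exists CFst. intro; apply ev_p1. Qed.
Lemma C_p2 o : C o p2.
Proof. exists CSnd. intro; apply ev_p2. Qed.
Lemma C_compose o F G : C o F -> C o G -> C o (fun x => F (G x)).
Proof. intros [c Hc] [d Hd]. exists (CComp c d). intro x. econstructor; eauto. Qed.
Lemma C_pair o F G : C o F -> C o G -> C o (fun x => cpair (F x) (G x)).
Proof. intros [c Hc] [d Hd]. exists (CPair c d). intro x. econstructor; eauto. Qed.
Lemma C_const o k : C o (fun _ => k).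
Proof. induction k. apply C_zero. apply (C_compose o S (fun _ => k)); auto using C_succ. Qed.

Definition C2 o (F : nat -> nat -> nat) := C o (fun z => F (p1 z) (p2 z)).
Definition C3 o (F : nat -> nat -> nat -> nat) := C o (fun z => F (p1 z) (p1 (p2 z)) (p2 (p2 z))).

Lemma C_comp2 o F A B : C2 o F -> C o A -> C o B -> C o (fun x => F (A x) (B x)).
Proof. intros HF HA HB.
  apply (C_ext o (fun x => (fun z => F (p1 z) (p2 z)) (cpair (A x) (B x)))).
  intro; rewrite p1_c, p2_c; auto.
  apply (C_compose o (fun z => F (p1 z) (p2 z)) (fun x => cpair (A x) (B x))); auto. apply C_pair; auto. Qed.
Lemma C_comp3 o F A B D : C3 o F -> C o A -> C o B -> C o D -> C o (fun x => F (A x) (B x) (D x)).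
Proof. intros HF HA HB HD.
  apply (C_ext o (fun x => (fun z => F (p1 z) (p1 (p2 z)) (p2 (p2 z))) (cpair (A x) (cpair (B x) (D x))))).
  intro; rewrite !p1_c, !p2_c, p1_c; auto.
  apply (C_compose o (fun z => F (p1 z) (p1 (p2 z)) (p2 (p2 z))) (fun x => cpair (A x) (cpair (B x) (D x)))); auto. apply C_pair; auto. apply C_pair; auto. Qed.

Definition prec (G : nat -> nat) (H : nat -> nat -> nat -> nat) (x n : nat) : nat :=
  nat_rec (fun _ => nat) (G x) (fun n r => H x n r) n.

Lemma C_prec o G H : C o G -> C3 o H -> C2 o (prec G H).
Proof.
  intros [c Hc] [d Hd]. exists (CRec c d). intro z. rewrite <- (cp_eta z) at 1.
  generalize (p1 z) (p2 z). intros x n. induction n; simpl.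
  - constructor. apply Hc.
  - eapply ev_recS. apply IHn. specialize (Hd (cpair x (cpair n (prec G H x n)))).
    rewrite !p1_c, !p2_c, p1_c in Hd. exact Hd.
Qed.

Lemma C_mu o F G : C2 o F -> (forall x, F x (G x) = 0 /\ forall m, m < G x -> F x m <> 0) -> C o G.
Proof.
  intros [c Hc] HG. exists (CMu c). intro x. destruct (HG x) as [H1 H2]. constructor.
  - specialize (Hc (cpair x (G x))). rewrite p1_c, p2_c, H1 in Hc. exact Hc.
  - intros m Hm. specialize (Hc (cpair x m)). rewrite p1_c, p2_c in Hc.
    specialize (H2 m Hm). destruct (F x m) eqn:E. congruence. eauto.
Qed.

Fixpoint subst (d : code) (c : code) : code :=
  match c with
  | COracle => d
  | CComp c1 c2 => CComp (subst d c1) (subst d c2)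
  | CPair c1 c2 => CPair (subst d c1) (subst d c2)
  | CRec c1 c2 => CRec (subst d c1) (subst d c2)
  | CMu c1 => CMu (subst d c1)
  | c => c
  end.

Lemma eval_subst o1 o2 d : (forall x, eval o2 d x (o1 x)) ->
  forall c x y, eval o1 c x y -> eval o2 (subst d c) x y.
Proof.
  intros Hd. fix IH 4. intros c x y H. destruct H; simpl.
  all: try (constructor; fail).
  apply Hd.
  econstructor; [apply (IH _ _ _ H) | apply (IH _ _ _ H0)].
  econstructor; [apply (IH _ _ _ H) | apply (IH _ _ _ H0)].
  econstructor; apply (IH _ _ _ H).
  eapply ev_recS; [apply (IH _ _ _ H) | apply (IH _ _ _ H0)].
  constructor. apply IH; auto. intros m Hm. destruct (H0 m Hm) as [k Hk]. exists k. apply IH. exact Hk.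
Qed.

Lemma C_trans o1 o2 F : C o2 o1 -> C o1 F -> C o2 F.
Proof. intros [d Hd] [c Hc]. exists (subst d c). intro. apply eval_subst with o1; auto. Qed.

Lemma C_from_computable o F : computable F -> C o F.
Proof. intro H. apply (C_trans (fun _ => 0)); auto. apply C_zero. Qed.
Class K1 (o : nat -> nat) (F : nat -> nat) := k1 : C o F.
Class K2 (o : nat -> nat) (F : nat -> nat -> nat) := k2 : C2 o F.
Class K3 (o : nat -> nat) (F : nat -> nat -> nat -> nat) := k3 : C3 o F.

#[export] Instance K1_S o : K1 o S := C_succ o.
#[export] Instance K1_p1 o : K1 o p1 := C_p1 o.
#[export] Instance K1_p2 o : K1 o p2 := C_p2 o.
#[export] Instance K1_o o : K1 o o := C_oracle o.

Ltac ctac := repeat match goal with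
 | |- C _ (fun x => x) => apply C_id
 | |- C _ (fun _ => _) => apply C_const
 | |- C ?o (fun x => ?F (@?A x) (@?B x) (@?D x)) =>
     apply (C_comp3 o F A B D); [exact (@k3 o F _) | | |]
 | |- C ?o (fun x => ?F (@?A x) (@?B x)) =>
     apply (C_comp2 o F A B); [exact (@k2 o F _) | |]
 | |- C ?o (fun x => ?F (@?A x)) =>
     apply (C_compose o F A); [exact (@k1 o F _) |]
 | |- C ?o ?F => exact (@k1 o F _)
 end.

#[export] Instance K2_cpair o : K2 o cpair.
Proof. unfold K2, C2. apply (C_ext o (fun z => z)). intro; symmetry; apply cp_eta. apply C_id. Qed.

Lemma K2_prec o G H : C o G -> C3 o H -> K2 o (prec G H).
Proof. apply C_prec. Qed.

#[export] Instance K2_add o : K2 o Nat.add.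
Proof.
  assert (E : forall x n, x + n = prec (fun x => x) (fun _ _ r => S r) x n).
  { intros x n; induction n; simpl; auto; unfold prec in *; simpl; lia. }
  unfold K2, C2. eapply C_ext. intro z; symmetry; apply E.
  apply C_prec. ctac. unfold C3. ctac.
Qed.
#[export] Instance K2_mul o : K2 o Nat.mul.
Proof.
  assert (E : forall x n, x * n = prec (fun _ => 0) (fun x _ r => r + x) x n).
  { intros x n; induction n; simpl; unfold prec in *; simpl; lia. }
  unfold K2, C2. eapply C_ext. intro z; symmetry; apply E.
  apply C_prec. ctac. unfold C3. ctac.
Qed.
#[export] Instance K1_pred o : K1 o pred.
Proof.
  assert (E : forall n, pred n = prec (fun _ => 0) (fun _ n _ => n) 0 n).
  { intros n; induction n; simpl; auto. }
  unfold K1. eapply C_ext. intro; symmetry; apply E.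
  assert (K2 o (prec (fun _ => 0) (fun _ n _ => n))). { apply C_prec. ctac. unfold C3. ctac. }
  ctac.
Qed.
#[export] Instance K2_sub o : K2 o Nat.sub.
Proof.
  assert (E : forall x n, x - n = prec (fun x => x) (fun _ _ r => pred r) x n).
  { intros x n; induction n; simpl; unfold prec in *; simpl; lia. }
  unfold K2, C2. eapply C_ext. intro z; symmetry; apply E.
  apply C_prec. ctac. unfold C3. ctac.
Qed.

Definition ite (a b c : nat) := match a with 0 => b | _ => c end.
#[export] Instance K3_ite o : K3 o ite.
Proof.
  assert (E : forall a b c, ite a b c = prec p1 (fun w _ _ => p2 w) (cpair b c) a).
  { intros a b c; destruct a; unfold ite, prec; cbn -[p1 p2 cpair]; rewrite ?p1_c, ?p2_c; auto. }
  assert (K2 o (prec p1 (fun w _ _ => p2 w))). { apply C_prec. ctac. unfold C3. ctac. }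
  unfold K3, C3. eapply C_ext. intro z; symmetry; apply E. ctac.
Qed.

Definition ltn a b := ite (b - a) 0 1.
Lemma ltn_spec a b : ltn a b = if a <? b then 1 else 0.
Proof. unfold ltn, ite. destruct (b - a) eqn:E; destruct (a <? b) eqn:F; auto;
  apply Nat.ltb_lt in F || apply Nat.ltb_ge in F; lia. Qed.
#[export] Instance K2_ltn o : K2 o ltn.
Proof. unfold K2, C2, ltn. ctac. Qed.
Definition eqn a b := ite (a - b + (b - a)) 1 0.
Lemma eqn_spec a b : eqn a b = if a =? b then 1 else 0.
Proof. unfold eqn, ite. destruct (a - b + (b - a)) eqn:E; destruct (a =? b) eqn:F; auto;
  apply Nat.eqb_eq in F || apply Nat.eqb_neq in F; lia. Qed.
#[export] Instance K2_eqn o : K2 o eqn.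
Proof. unfold K2, C2, eqn. ctac. Qed.
#[export] Instance K2_max o : K2 o Nat.max.
Proof. unfold K2, C2. eapply C_ext. intro z. instantiate (1 := fun z => p1 z + (p2 z - p1 z)). simpl. lia. ctac. Qed.

Definition sumr (F : nat -> nat -> nat) := prec (fun _ => 0) (fun x n r => r + F x n).
Definition prodr (F : nat -> nat -> nat) := prec (fun _ => 1) (fun x n r => r * F x n).
Definition maxr (F : nat -> nat -> nat) := prec (fun _ => 0) (fun x n r => Nat.max r (F x n)).
Lemma K2_sumr o F : K2 o F -> K2 o (sumr F).
Proof. intro. apply C_prec. ctac. unfold C3. ctac. Qed.
Lemma K2_prodr o F : K2 o F -> K2 o (prodr F).
Proof. intro. apply C_prec. ctac. unfold C3. ctac. Qed.
Lemma K2_maxr o F : K2 o F -> K2 o (maxr F).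
Proof. intro. apply C_prec. ctac. unfold C3. ctac. Qed.

Lemma sumr_spec F x b : sumr F x b <> 0 <-> exists n, n < b /\ F x n <> 0.
Proof.
  induction b; unfold sumr in *; simpl.
  - split; [congruence | intros (n & H & _); lia].
  - split.
    + intro H. destruct (F x b) eqn:E.
      * rewrite Nat.add_0_r in H. destruct (proj1 IHb H) as (n & ? & ?). exists n; split; auto; lia.
      * exists b; split; auto; lia.
    + intros (n & Hn & Hf). destruct (Nat.eq_dec n b). subst. lia.
      assert (prec (fun _ => 0) (fun x n r => r + F x n) x b <> 0) by (apply IHb; exists n; split; auto; lia). lia.
Qed.
Lemma prodr_spec F x b : prodr F x b <> 0 <-> forall n, n < b -> F x n <> 0.
Proof.
  induction b; unfold prodr in *; simpl.
  - split; intros; lia.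
  - rewrite Nat.mul_eq_0. split.
    + intros H n Hn. destruct (Nat.eq_dec n b). subst. tauto. apply IHb; [tauto | lia].
    + intros H [H1|H1]. revert H1. apply IHb. intros; apply H; lia. apply (H b); auto.
Qed.
Lemma maxr_spec F x b n : n < b -> F x n <= maxr F x b.
Proof.
  induction b; unfold maxr in *; simpl; intros. lia.
  destruct (Nat.eq_dec n b). subst. lia. specialize (IHb ltac:(lia)). lia.
Qed.
Lemma maxr_mono F x b b' : b <= b' -> maxr F x b <= maxr F x b'.
Proof. induction 1; unfold maxr in *; simpl; lia. Qed.
Fixpoint rstate (b : option nat) (st : nat -> nat -> option nat) (n : nat) : option nat :=
  match n with 0 => b | S n => match rstate b st n with Some y => st n y | None => None end end.
Fixpoint mstate (g : nat -> option nat) (n : nat) : option (option nat) :=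
  match n with
  | 0 => Some None
  | S n => match mstate g n with
           | Some None => match g n with Some 0 => Some (Some n) | Some (S _) => Some None | None => None end
           | r => r end
  end.

Fixpoint run (k : nat) (o : nat -> option nat) (c : code) (x : nat) : option nat :=
  match c with
  | CZero => Some 0 | CSucc => Some (S x) | CId => Some x
  | COracle => if x <? k then o x else None
  | CFst => Some (p1 x) | CSnd => Some (p2 x)
  | CComp c1 c2 => match run k o c2 x with Some y => run k o c1 y | None => None end
  | CPair c1 c2 => match run k o c1 x, run k o c2 x with Some a, Some b => Some (cpair a b) | _, _ => None end
  | CRec c1 c2 => rstate (run k o c1 (p1 x)) (fun n y => run k o c2 (cpair (p1 x) (cpair n y))) (p2 x)
  | CMu c1 => match mstate (fun i => run k o c1 (cpair x i)) k with Some (Some n) => Some n | _ => None end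
  end.

Lemma mstate_spec g k n : mstate g k = Some (Some n) <->
  n < k /\ g n = Some 0 /\ forall m, m < n -> exists v, g m = Some (S v).
Proof.
  assert (A : forall k, mstate g k = Some None <-> forall m, m < k -> exists v, g m = Some (S v)).
  { induction k0; simpl. split; intros; [lia | auto].
    destruct (mstate g k0) as [[r|]|] eqn:E.
    - split; [congruence|]. intro H. destruct (H k0 ltac:(lia)) as [v Hv].
      assert (forall m, m < k0 -> exists v, g m = Some (S v)) by (intros; apply H; lia).
      apply IHk0 in H0. congruence.
    - destruct (g k0) as [[|v]|] eqn:G.
      + split; [congruence|]. intro H. destruct (H k0 ltac:(lia)). congruence.
      + split; auto. intros _ m Hm. destruct (Nat.eq_dec m k0). subst; eauto. apply IHk0; auto; lia.
      + split; [congruence|]. intro H. destruct (H k0 ltac:(lia)). congruence.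
    - split; [congruence|]. intro H. assert (None = Some (@None nat)) by (apply IHk0; intros; apply H; lia). congruence. }
  revert n. induction k; intro n; simpl. split; [congruence | lia].
  destruct (mstate g k) as [[r|]|] eqn:E.
  - split.
    + intro H. inversion H; subst. destruct (proj1 (IHk n) eq_refl) as (E1 & E2 & E3). intuition lia.
    + intros (H1 & H2 & H3). f_equal. destruct (proj1 (IHk r) eq_refl) as (E1 & E2 & E3).
      destruct (lt_eq_lt_dec r n) as [[L|L]|L]; auto.
      destruct (H3 r L). congruence. destruct (E3 n L); congruence.
  - destruct (g k) as [[|v]|] eqn:G.
    + split.
      * intro H; inversion H; subst. split; auto. split; auto. apply A; auto.
      * intros (H1 & H2 & H3). destruct (Nat.eq_dec n k). subst; auto.
        destruct (proj1 (A k) E n ltac:(lia)); congruence.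
    + split; [congruence|]. intros (H1 & H2 & H3). destruct (Nat.eq_dec n k). congruence.
      destruct (proj1 (A k) E n ltac:(lia)); congruence.
    + split; [congruence|]. intros (H1 & H2 & H3). destruct (Nat.eq_dec n k). congruence.
      destruct (proj1 (A k) E n ltac:(lia)); congruence.
  - split; [congruence|]. intros (H1 & H2 & H3). destruct (Nat.eq_dec n k). subst.
    assert (mstate g k = Some None) by (apply A; auto). congruence.
    assert (@None (option nat) = Some (Some n)) by (apply IHk; intuition lia). congruence.
Qed.

Definition osub (o o' : nat -> option nat) := forall i v, o i = Some v -> o' i = Some v.

Lemma run_mono c : forall k k' o o' x y, run k o c x = Some y -> k <= k' -> osub o o' -> run k' o' c x = Some y.
Proof.
  induction c; intros k k' o o' x y H Hk Ho; simpl in *; auto.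
  - destruct (x <? k) eqn:E; [|congruence]. apply Nat.ltb_lt in E.
    replace (x <? k') with true by (symmetry; apply Nat.ltb_lt; lia). auto.
  - destruct (run k o c2 x) eqn:E; [|congruence]. rewrite (IHc2 _ _ _ _ _ _ E Hk Ho). eauto.
  - destruct (run k o c1 x) eqn:E1; [|congruence]. destruct (run k o c2 x) eqn:E2; [|congruence].
    rewrite (IHc1 _ _ _ _ _ _ E1 Hk Ho), (IHc2 _ _ _ _ _ _ E2 Hk Ho). auto.
  - revert y H. generalize (p2 x). induction n; simpl; intros y H. eauto.
    destruct (rstate (run k o c1 (p1 x)) _ n) eqn:E; [|congruence].
    rewrite (IHn _ eq_refl). eauto.
  - destruct (mstate _ k) as [[r|]|] eqn:E; try congruence. inversion H; subst.
    apply mstate_spec in E. destruct E as (E1 & E2 & E3).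
    replace (mstate (fun i => run k' o' c (cpair x i)) k') with (Some (Some y)); auto.
    symmetry; apply mstate_spec. split; [lia|]. split; eauto.
    intros m Hm. destruct (E3 m Hm) as [v Hv]. eauto.
Qed.

Lemma run_dep c : forall k o o' x, (forall i, i < k -> o i = o' i) -> run k o c x = run k o' c x.
Proof.
  induction c; intros k o o' x Ho; simpl; auto.
  - destruct (x <? k) eqn:E; auto. apply Ho, Nat.ltb_lt; auto.
  - rewrite (IHc2 _ _ _ _ Ho). destruct (run k o' c2 x); auto.
  - rewrite (IHc1 _ _ _ _ Ho), (IHc2 _ _ _ _ Ho). auto.
  - generalize (p2 x). induction n; simpl. apply IHc1; auto. rewrite IHn.
    destruct (rstate (run k o' c1 (p1 x)) (fun n y => run k o' c2 (cpair (p1 x) (cpair n y))) n); auto.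
  - replace (mstate (fun i => run k o c (cpair x i)) k) with (mstate (fun i => run k o' c (cpair x i)) k); auto.
    generalize k at 2 4. induction k0; simpl; auto. rewrite IHk0. rewrite (IHc _ _ _ _ Ho). auto.
Qed.

Lemma run_sound O c : forall k o x y, run k o c x = Some y -> (forall i v, o i = Some v -> v = O i) -> eval O c x y.
Proof.
  induction c; intros k o x y H Ho; simpl in *; try (inversion H; subst; constructor; fail).
  - destruct (x <? k); [|congruence]. apply Ho in H. subst. constructor.
  - inversion H; subst; apply ev_p1.
  - inversion H; subst; apply ev_p2.
  - destruct (run k o c2 x) eqn:E; [|congruence]. econstructor; eauto.
  - destruct (run k o c1 x) eqn:E1; [|congruence]. destruct (run k o c2 x) eqn:E2; [|congruence].
    inversion H; subst. econstructor; eauto.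
  - rewrite <- (cp_eta x). revert y H. generalize (p2 x). induction n; simpl; intros y H.
    constructor; eauto.
    destruct (rstate (run k o c1 (p1 x)) _ n) eqn:E; [|congruence]. eapply ev_recS; eauto.
  - destruct (mstate _ k) as [[r|]|] eqn:E; try congruence. inversion H; subst.
    apply mstate_spec in E. destruct E as (E1 & E2 & E3). constructor; eauto.
    intros m Hm. destruct (E3 m Hm) as [v Hv]. eauto.
Qed.

Lemma fin_bound (P : nat -> nat -> Prop) n : (forall m k k', P m k -> k <= k' -> P m k') ->
  (forall m, m < n -> exists k, P m k) -> exists K, forall m, m < n -> P m K.
Proof.
  intros Mo. induction n; intro H. exists 0; intros; lia.
  destruct IHn as [K HK]. intros; apply H; lia. destruct (H n ltac:(lia)) as [k Hk].
  exists (Nat.max K k). intros m Hm. destruct (Nat.eq_dec m n). subst. eapply Mo; eauto; lia.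
  eapply Mo; [apply HK; lia | lia].
Qed.

Definition sor (O : nat -> nat) : nat -> option nat := fun i => Some (O i).
Lemma osub_refl o : osub o o. Proof. intros i v; auto. Qed.

Lemma run_complete O : forall c x y, eval O c x y -> exists k, run k (sor O) c x = Some y.
Proof.
  fix IH 4. intros c x y H. destruct H; simpl.
  all: try (exists 0; reflexivity).
  - exists (S x). replace (x <? S x) with true by (symmetry; apply Nat.ltb_lt; lia). auto.
  - exists 0. rewrite p1_c; auto.
  - exists 0. rewrite p2_c; auto.
  - destruct (IH _ _ _ H) as [k1 H1]. destruct (IH _ _ _ H0) as [k2 H2].
    exists (Nat.max k1 k2). rewrite (run_mono _ _ (Nat.max k1 k2) _ _ _ _ H1 (Nat.le_max_l _ _) (osub_refl _)).
    eapply run_mono; eauto using osub_refl; lia.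
  - destruct (IH _ _ _ H) as [k1 H1]. destruct (IH _ _ _ H0) as [k2 H2].
    exists (Nat.max k1 k2). rewrite (run_mono _ _ (Nat.max k1 k2) _ _ _ _ H1 (Nat.le_max_l _ _) (osub_refl _)).
    rewrite (run_mono _ _ (Nat.max k1 k2) _ _ _ _ H2 (Nat.le_max_r _ _) (osub_refl _)). auto.
  - destruct (IH _ _ _ H) as [k1 H1]. exists k1. rewrite p1_c, p2_c. auto.
  - destruct (IH _ _ _ H) as [k1 H1]. destruct (IH _ _ _ H0) as [k2 H2].
    exists (Nat.max k1 k2). rewrite !p1_c, !p2_c. simpl.
    assert (E := run_mono _ _ _ _ _ _ _ H1 (Nat.le_max_l k1 k2) (osub_refl _)). simpl in E. rewrite p1_c, p2_c in E.
    rewrite E. eapply run_mono; eauto using osub_refl; lia.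
  - destruct (IH _ _ _ H) as [k1 H1].
    assert (exists K, forall m, m < n -> exists v, run K (sor O) c (cpair x m) = Some (S v)) as [K HK].
    { apply fin_bound. intros m k k' [v Hv] Hk. exists v. eapply run_mono; eauto using osub_refl.
      intros m Hm. destruct (H0 m Hm) as [v Hv]. destruct (IH _ _ _ Hv) as [k Hk]. eauto. }
    exists (Nat.max (S n) (Nat.max k1 K)).
    replace (mstate _ _) with (Some (Some n)); auto. symmetry. apply mstate_spec.
    split; [lia|]. split. eapply run_mono; eauto using osub_refl; lia.
    intros m Hm. destruct (HK m Hm) as [v Hv]. exists v. eapply run_mono; eauto using osub_refl; lia.
Qed.
Definition enc (v : option nat) : nat := match v with None => 0 | Some y => S y end.
Definition encO (ORC : nat -> nat -> option nat) (u i : nat) : nat := enc (ORC u i).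
Definition Erun (ORC : nat -> nat -> option nat) (c : code) (w x : nat) : nat :=
  enc (run (p1 w) (ORC (p2 w)) c x).
Definition me (v : option (option nat)) : nat :=
  match v with None => 0 | Some None => 1 | Some (Some n) => S (S n) end.

Definition RR ORC c1 c2 := prec (fun v => Erun ORC c1 (p1 v) (p1 (p2 v)))
  (fun v n r => ite r 0 (Erun ORC c2 (p1 v) (cpair (p1 (p2 v)) (cpair n (pred r))))).
Definition MM ORC c1 := prec (fun _ => 1) (fun v n r => ite r 0 (ite (pred r)
   (ite (Erun ORC c1 (p1 v) (cpair (p2 v) n)) 0 (ite (pred (Erun ORC c1 (p1 v) (cpair (p2 v) n))) (S (S n)) 1)) r)).

Lemma C_run o ORC : K2 o (encO ORC) -> forall c, K2 o (Erun ORC c).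
Proof.
  intros HO. induction c; unfold K2, C2.
  - eapply C_ext. intro z. instantiate (1 := fun _ => 1). reflexivity. ctac.
  - eapply C_ext. intro z. instantiate (1 := fun z => S (S (p2 z))). reflexivity. ctac.
  - eapply C_ext. intro z. instantiate (1 := fun z => S (p2 z)). reflexivity. ctac.
  - eapply C_ext. intro z. instantiate (1 := fun z => ite (ltn (p2 z) (p1 (p1 z))) 0 (encO ORC (p2 (p1 z)) (p2 z))).
    unfold Erun, encO; simpl. rewrite ltn_spec. destruct (_ <? _); reflexivity. ctac.
  - eapply C_ext. intro z. instantiate (1 := fun z => S (p1 (p2 z))). reflexivity. ctac.
  - eapply C_ext. intro z. instantiate (1 := fun z => S (p2 (p2 z))). reflexivity. ctac.
  - eapply C_ext. intro z.
    instantiate (1 := fun z => ite (Erun ORC c2 (p1 z) (p2 z)) 0 (Erun ORC c1 (p1 z) (pred (Erun ORC c2 (p1 z) (p2 z))))).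
    unfold Erun; simpl. destruct (run _ _ c2 _); reflexivity. ctac.
  - eapply C_ext. intro z.
    instantiate (1 := fun z => ite (Erun ORC c1 (p1 z) (p2 z)) 0 (ite (Erun ORC c2 (p1 z) (p2 z)) 0
       (S (cpair (pred (Erun ORC c1 (p1 z) (p2 z))) (pred (Erun ORC c2 (p1 z) (p2 z))))))).
    unfold Erun; simpl. destruct (run _ _ c1 _); destruct (run _ _ c2 _); reflexivity. ctac.
  - assert (K2 o (RR ORC c1 c2)). { apply C_prec; unfold C3; ctac. }
    eapply C_ext. intro z. instantiate (1 := fun z => RR ORC c1 c2 (cpair (p1 z) (p2 z)) (p2 (p2 z))).
    simpl. generalize (p1 z) (p2 z). intros w x. unfold Erun. simpl. generalize (p2 x).
    induction n; unfold RR in *; simpl; rewrite ?p1_c, ?p2_c. reflexivity.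
    rewrite IHn. destruct (rstate _ _ n); simpl; rewrite ?p1_c, ?p2_c; reflexivity.
    ctac.
  - assert (K2 o (MM ORC c)). { apply C_prec; unfold C3; ctac. }
    eapply C_ext. intro z. instantiate (1 := fun z => ite (pred (MM ORC c (cpair (p1 z) (p2 z)) (p1 (p1 z)))) 0
        (pred (MM ORC c (cpair (p1 z) (p2 z)) (p1 (p1 z))))).
    simpl. generalize (p1 z) (p2 z). intros w x. unfold Erun. simpl.
    assert (forall n, me (mstate (fun i => run (p1 w) (ORC (p2 w)) c (cpair x i)) n) = MM ORC c (cpair w x) n).
    { induction n; unfold MM in *; simpl. reflexivity. rewrite <- IHn.
      destruct (mstate _ n) as [[r|]|]; simpl; auto. rewrite ?p1_c, ?p2_c. unfold Erun.
      destruct (run _ _ c _) as [[|v]|]; reflexivity. }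
    rewrite <- H0. destruct (mstate _ _) as [[r|]|]; reflexivity.
    ctac.
Qed.
Definition dp n := prec (fun _ => cpair 0 0) (fun _ _ r => ite (p2 r) (cpair (p1 r) 1) (cpair (S (p1 r)) 0)) 0 n.
Definition hv n := p1 (dp n).
Definition od n := p2 (dp n).
Lemma dp_inv n : n = 2 * hv n + od n /\ od n <= 1.
Proof.
  unfold hv, od. induction n. unfold dp; simpl; rewrite ?p1_c, ?p2_c. lia.
  assert (E : dp (S n) = ite (p2 (dp n)) (cpair (p1 (dp n)) 1) (cpair (S (p1 (dp n))) 0)) by reflexivity.
  rewrite E. destruct (p2 (dp n)) eqn:E'; unfold ite; rewrite ?p1_c, ?p2_c; lia.
Qed.
Lemma hv_od_uniq n a b : n = 2 * a + b -> b <= 1 -> hv n = a /\ od n = b.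
Proof. intros. destruct (dp_inv n). lia. Qed.

#[export] Instance K1_dp o : K1 o dp.
Proof. unfold K1, dp. assert (K2 o (prec (fun _ => cpair 0 0) (fun _ _ r => ite (p2 r) (cpair (p1 r) 1) (cpair (S (p1 r)) 0)))).
  { apply C_prec; unfold C3; ctac. } ctac. Qed.
#[export] Instance K1_hv o : K1 o hv. Proof. unfold K1, hv. ctac. Qed.
#[export] Instance K1_od o : K1 o od. Proof. unfold K1, od. ctac. Qed.

Definition tl n := hv (pred n).
Definition hdn n := ite n 0 (1 - od n).
Definition itl := prec (fun n => n) (fun _ _ r => tl r).
Definition slen n := sumr (fun n i => ite (itl n i) 0 1) n n.
Definition sbit n i := hdn (itl n i).
#[export] Instance K1_tl o : K1 o tl. Proof. unfold K1, tl. ctac. Qed.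
#[export] Instance K1_hdn o : K1 o hdn. Proof. unfold K1, hdn. ctac. Qed.
#[export] Instance K2_itl o : K2 o itl. Proof. apply C_prec; unfold C3; ctac. Qed.
#[export] Instance K1_slen o : K1 o slen.
Proof. unfold K1, slen. assert (K2 o (sumr (fun n i => ite (itl n i) 0 1))). { apply K2_sumr. unfold K2, C2; ctac. } ctac. Qed.
#[export] Instance K2_sbit o : K2 o sbit. Proof. unfold K2, C2, sbit. ctac. Qed.

Definition b2n (b : bool) : nat := if b then 1 else 0.

Lemma tl_cons b t : tl (scode (b :: t)) = scode t.
Proof. unfold tl. destruct b; cbn [scode].
  - destruct (hv_od_uniq (pred (2 * scode t + 2)) (scode t) 1); lia.
  - destruct (hv_od_uniq (pred (2 * scode t + 1)) (scode t) 0); lia. Qed.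
Lemma hdn_cons b t : hdn (scode (b :: t)) = b2n b.
Proof. unfold hdn. destruct b; cbn [scode].
  - destruct (hv_od_uniq (2 * scode t + 2) (S (scode t)) 0); try lia.
    replace (2 * scode t + 2) with (S (S (2 * scode t))) in * by lia. unfold ite. rewrite H0. reflexivity.
  - destruct (hv_od_uniq (2 * scode t + 1) (scode t) 1); try lia.
    replace (2 * scode t + 1) with (S (2 * scode t)) in * by lia. unfold ite. rewrite H0. reflexivity. Qed.
Lemma tl_0 : tl 0 = 0.
Proof. unfold tl. destruct (hv_od_uniq 0 0 0); auto. Qed.
Lemma scode_0 s : scode s = 0 <-> s = [].
Proof. destruct s as [|[] t]; simpl; split; intros; try congruence; lia. Qed.
Lemma itl_S n i : itl n (S i) = itl (tl n) i.
Proof. induction i. reflexivity. change (itl n (S (S i))) with (tl (itl n (S i))). rewrite IHi. reflexivity. Qed.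
Lemma itl_scode s i : itl (scode s) i = scode (skipn i s).
Proof.
  revert s. induction i; intro s. reflexivity.
  rewrite itl_S. destruct s as [|b t]. change (scode []) with 0. rewrite tl_0. change 0 with (scode []) at 1. rewrite (IHi []). destruct i; reflexivity.
  rewrite tl_cons, IHi. reflexivity.
Qed.
Lemma len_le_scode s : length s <= scode s.
Proof. induction s as [|[] t]; simpl; lia. Qed.
Lemma scode_lt s : scode s < 2 ^ (S (length s)).
Proof. assert (scode s + 2 <= 2 ^ (S (length s))). { induction s as [|b t IH]; cbn [scode length]. simpl; lia.
  rewrite (Nat.pow_succ_r' 2 (S (length t))). destruct b; lia. } lia. Qed.

Lemma sumr_count (F : nat -> nat -> nat) x L b : (forall i, F x i = if i <? L then 1 else 0) -> L <= b -> sumr F x b = L.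
Proof.
  intros HF. induction b; intro Hb. assert (L = 0) by lia; subst; reflexivity.
  destruct (Nat.eq_dec L (S b)).
  - subst. change (sumr F x (S b)) with (sumr F x b + F x b). rewrite HF.
    replace (b <? S b) with true by (symmetry; apply Nat.ltb_lt; lia).
    assert (forall c, c <= b -> sumr F x c = c).
    { induction c; intro. reflexivity. change (sumr F x (S c)) with (sumr F x c + F x c). rewrite IHc by lia. rewrite HF.
      replace (c <? S b) with true by (symmetry; apply Nat.ltb_lt; lia). lia. }
    rewrite H; lia.
  - change (sumr F x (S b)) with (sumr F x b + F x b). rewrite IHb by lia. rewrite HF.
    replace (b <? L) with false by (symmetry; apply Nat.ltb_ge; lia). lia.
Qed.

Lemma slen_scode s : slen (scode s) = length s.
Proof.
  unfold slen. apply sumr_count. 2: apply len_le_scode.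
  intro i. rewrite itl_scode. destruct (i <? length s) eqn:E.
  - apply Nat.ltb_lt in E. destruct (skipn i s) eqn:E2. apply (f_equal (@length bool)) in E2. rewrite length_skipn in E2. simpl in E2. lia.
    destruct b; cbn [scode]; unfold ite; destruct (2 * scode l) ; reflexivity.
  - apply Nat.ltb_ge in E. rewrite skipn_all2 by lia. reflexivity.
Qed.
Lemma sbit_scode s i : sbit (scode s) i = b2n (nth i s false).
Proof.
  unfold sbit. rewrite itl_scode. revert s; induction i; intros [|b t]; simpl; auto.
  rewrite <- hdn_cons with (t := t). reflexivity.
Qed.

Definition so (s : string) : nat -> option nat := fun i => if i <? length s then Some (b2n (nth i s false)) else None.
Definition orcN (u i : nat) : option nat := if i <? slen u then Some (sbit u i) else None.
Lemma orcN_scode s i : orcN (scode s) i = so s i.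
Proof. unfold orcN, so. rewrite slen_scode, sbit_scode. reflexivity. Qed.
#[export] Instance K2_orcN o : K2 o (encO orcN).
Proof. unfold K2, C2. eapply C_ext. intro z. instantiate (1 := fun z => ite (ltn (p2 z) (slen (p1 z))) 0 (S (sbit (p1 z) (p2 z)))).
  unfold encO, orcN. rewrite ltn_spec. destruct (_ <? _); reflexivity. ctac. Qed.

Definition pow2 n := prec (fun _ => 1) (fun _ _ r => r + r) 0 n.
Lemma pow2_spec n : pow2 n = 2 ^ n.
Proof. induction n. reflexivity. change (pow2 (S n)) with (pow2 n + pow2 n). rewrite IHn. simpl. lia. Qed.
#[export] Instance K1_pow2 o : K1 o pow2.
Proof. unfold K1, pow2. assert (K2 o (prec (fun _ => 1) (fun _ _ r => r + r))). { apply C_prec; unfold C3; ctac. } ctac. Qed.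
Lemma init_length X n : length (init X n) = n.
Proof. unfold init. rewrite length_map, length_seq. reflexivity. Qed.
Lemma init_S X n : init X (S n) = init X n ++ [X n].
Proof. unfold init. rewrite seq_S, map_app. reflexivity. Qed.
Lemma nth_init X n i d : i < n -> nth i (init X n) d = X i.
Proof. intro H. unfold init. rewrite nth_indep with (d' := X 0) by (rewrite length_map, length_seq; lia).
  rewrite map_nth, seq_nth by lia. reflexivity. Qed.
Lemma init_ext X Y n : (forall i, i < n -> X i = Y i) -> init X n = init Y n.
Proof. intro H. apply nth_ext with (d := false) (d' := false). rewrite !init_length; auto.
  intros i Hi. rewrite init_length in Hi. rewrite !nth_init; auto. Qed.
Lemma init_eq_inv X Y n i : init X n = init Y n -> i < n -> X i = Y i.
Proof. intros H Hi. rewrite <- (nth_init X n i false Hi), <- (nth_init Y n i false Hi), H. reflexivity. Qed.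
Lemma firstn_init X m n : m <= n -> firstn m (init X n) = init X m.
Proof. intro H. apply nth_ext with (d := false) (d' := false). rewrite length_firstn, !init_length; lia.
  intros i Hi. rewrite length_firstn, init_length in Hi. rewrite nth_firstn.
  replace (i <? m) with true by (symmetry; apply Nat.ltb_lt; lia). rewrite !nth_init; auto; lia. Qed.
Lemma prefix_init X m n : m <= n -> prefix (init X m) (init X n).
Proof. intro H. exists (skipn m (init X n)). rewrite <- (firstn_init X m n H) at 1. symmetry; apply firstn_skipn. Qed.
Lemma prefix_nth a b i d : prefix a b -> i < length a -> nth i a d = nth i b d.
Proof. intros [u ->] H. rewrite app_nth1; auto. Qed.
Lemma prefix_length a b : prefix a b -> length a <= length b.
Proof. intros [u ->]. rewrite length_app. lia. Qed.
Lemma prefix_firstn a n : prefix (firstn n a) a.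
Proof. exists (skipn n a). symmetry; apply firstn_skipn. Qed.

Lemma in_len_sum (t : string) l : In t l -> length t <= list_sum (map (@length bool) l).
Proof. induction l; simpl; intro H. contradiction. destruct H. subst. lia. specialize (IHl H). lia. Qed.
Lemma path_extendible T X n : path T X -> extendible T (init X n).
Proof.
  intro HX. split. apply HX. intro l.
  set (B := S (n + list_sum (map (@length bool) l))).
  exists (init X B). split. apply HX. split. apply prefix_init. unfold B; lia.
  intro Hin. apply in_len_sum in Hin. rewrite init_length in Hin. unfold B in Hin. lia.
Qed.

Lemma extendible_step T s : is_tree T -> extendible T s ->
  extendible T (s ++ [false]) \/ extendible T (s ++ [true]).
Proof.
  intros HT [Hs Hext]. apply NNPP. intro Hno. apply not_or_and in Hno. destruct Hno as [N0 N1].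
  assert (F : forall b, ~ extendible T (s ++ [b]) -> exists l, forall t, T t -> prefix (s ++ [b]) t -> In t l).
  { intros b Nb. destruct (classic (T (s ++ [b]))) as [Tb|Tb].
    - apply NNPP. intro H. apply Nb. split; auto. intro l. apply NNPP. intro H2. apply H. exists l.
      intros t Tt Pt. apply NNPP. intro Ht. apply H2. exists t; auto.
    - exists []. intros t Tt Pt. exfalso. apply Tb. apply (HT _ t); auto. }
  destruct (F _ N0) as [l0 H0]. destruct (F _ N1) as [l1 H1].
  destruct (Hext (s :: l0 ++ l1)) as (t & Tt & [u Hu] & Hin). subst t.
  destruct u as [|b u]. apply Hin. left. rewrite app_nil_r; auto.
  apply Hin. right. apply in_or_app. destruct b; [right; apply H1 | left; apply H0]; auto;
  exists u; rewrite <- app_assoc; reflexivity.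
Qed.

Lemma koenig T s : is_tree T -> extendible T s -> exists X, path T X /\ init X (length s) = s.
Proof.
  intros HT Hs.
  set (next := fun t : string => if excluded_middle_informative (extendible T (t ++ [false])) then t ++ [false] else t ++ [true]).
  assert (Hn : forall t, extendible T t -> extendible T (next t) /\ exists b, next t = t ++ [b]).
  { intros t Ht. unfold next. destruct (excluded_middle_informative _). split; eauto.
    destruct (extendible_step T t HT Ht). contradiction. split; eauto. }
  set (sq := fun k => Nat.iter k next s).
  assert (Hsq : forall k, extendible T (sq k) /\ length (sq k) = length s + k).
  { induction k. simpl. split; auto; lia. destruct IHk as [E L]. simpl. fold (sq k).
    destruct (Hn _ E) as [E2 [b Hb]]. split; auto. rewrite Hb, length_app, L. simpl. lia. }
  assert (Hpre : forall k d, prefix (sq k) (sq (k + d))).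
  { intros k d. induction d. rewrite Nat.add_0_r. exists []. rewrite app_nil_r; auto.
    replace (k + S d) with (S (k + d)) by lia. simpl. fold (sq (k + d)).
    destruct (Hn _ (proj1 (Hsq (k + d)))) as [_ [b Hb]]. rewrite Hb. destruct IHd as [u Hu].
    exists (u ++ [b]). rewrite Hu, app_assoc. reflexivity. }
  assert (Hnth : forall k k' i, i < length (sq k) -> i < length (sq k') -> nth i (sq k) false = nth i (sq k') false).
  { intros k k' i H1 H2. destruct (Nat.le_ge_cases k k').
    - replace k' with (k + (k' - k)) by lia. apply prefix_nth; auto.
    - replace k with (k' + (k - k')) by lia. symmetry. apply prefix_nth; auto. }
  set (X := fun i => nth i (sq (S i)) false).
  assert (HI : forall n, init X n = firstn n (sq n)).
  { intro n. apply nth_ext with (d := false) (d' := false).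
    rewrite init_length, length_firstn, (proj2 (Hsq n)). lia.
    intros i Hi. rewrite init_length in Hi. rewrite nth_init, nth_firstn by auto.
    replace (i <? n) with true by (symmetry; apply Nat.ltb_lt; lia). unfold X. apply Hnth.
    rewrite (proj2 (Hsq _)); lia. rewrite (proj2 (Hsq _)); lia. }
  exists X. split.
  - intro n. rewrite HI. apply (HT _ (sq n)). apply prefix_firstn. apply (proj1 (Hsq n)).
  - rewrite HI. destruct (Hpre 0 (length s)) as [u Hu]. simpl in Hu. rewrite Hu.
    rewrite firstn_app, Nat.sub_diag, firstn_all. simpl. apply app_nil_r.
Qed.

Lemma least_ex (P : nat -> Prop) : (exists n, P n) -> exists n, P n /\ forall m, P m -> n <= m.
Proof.
  intro H. destruct (dec_inh_nat_subset_has_unique_least_element P (fun n => classic (P n)) H) as [n [[H1 H2] _]].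
  eauto.
Qed.

Lemma principal_exists (A : nat -> Prop) : (forall N, exists m, N <= m /\ A m) -> exists p, principal_function A p.
Proof.
  intro HA.
  assert (Hl : forall b, exists m, (b <= m /\ A m) /\ forall m', b <= m' /\ A m' -> m <= m').
  { intro b. apply least_ex. apply HA. }
  set (nx := fun b => proj1_sig (constructive_indefinite_description _ (Hl b))).
  assert (Hnx : forall b, (b <= nx b /\ A (nx b)) /\ forall m', b <= m' /\ A m' -> nx b <= m').
  { intro b. unfold nx. destruct (constructive_indefinite_description _ _). simpl. auto. }
  set (p := fix p n := match n with 0 => nx 0 | S n => nx (S (p n)) end).
  assert (Hinc : forall n, p n < p (S n)). { intro n. simpl. destruct (Hnx (S (p n))) as [[H1 _] _]. lia. }
  assert (Hge : forall n, n <= p n). { induction n. lia. specialize (Hinc n). lia. }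
  assert (HpA : forall n, A (p n)). { destruct n; simpl; apply (Hnx _). }
  exists p. split; auto. intro m. split.
  - intro Am. destruct (least_ex (fun n => m <= p n)) as [n [Hn1 Hn2]]. exists m; auto.
    exists n. destruct n.
    + simpl in *. destruct (Hnx 0) as [_ H]. specialize (H m ltac:(split; auto; lia)). lia.
    + assert (~ m <= p n) by (intro; specialize (Hn2 n H); lia).
      simpl in *. destruct (Hnx (S (p n))) as [_ H2]. specialize (H2 m ltac:(split; auto; lia)). lia.
  - intros [n <-]. auto.
Qed.

Lemma first_diff (X Y : nat -> bool) K : ~ (forall i, i < K -> X i = Y i) ->
  exists d, d < K /\ (forall i, i < d -> X i = Y i) /\ X d <> Y d.
Proof.
  induction K; intro H. exfalso; apply H; intros; lia.
  destruct (classic (forall i, i < K -> X i = Y i)) as [H1|H1].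
  - exists K. split; auto. split; auto. intro E. apply H. intros i Hi. destruct (Nat.eq_dec i K). subst; auto. apply H1; lia.
  - destruct (IHK H1) as (d & ? & ? & ?). exists d; auto.
Qed.

Fixpoint allb (n : nat) : list (list bool) :=
  match n with 0 => [[]] | S n => map (cons false) (allb n) ++ map (cons true) (allb n) end.
Lemma allb_length n : length (allb n) = 2 ^ n.
Proof. induction n; simpl; auto. rewrite length_app, !length_map, IHn. lia. Qed.
Lemma allb_in n l : length l = n -> In l (allb n).
Proof. revert l; induction n; intros [|b l] H; simpl in *; try lia; auto.
  apply in_or_app. destruct b; [right|left]; apply in_map; apply IHn; lia. Qed.
Lemma NoDup_map_on {A B} (f : A -> B) l : NoDup l -> (forall x y, In x l -> In y l -> f x = f y -> x = y) -> NoDup (map f l).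
Proof.
  induction 1; intro Hf; simpl; constructor.
  - intro Hin. apply in_map_iff in Hin. destruct Hin as (y & Hy & Hin). assert (y = x) by (apply Hf; simpl; auto). subst; auto.
  - apply IHNoDup. intros; apply Hf; simpl; auto.
Qed.
Lemma bound_bool_lists (l : list (list bool)) n : NoDup l -> (forall x, In x l -> length x = n) -> length l <= 2 ^ n.
Proof. intros H1 H2. rewrite <- allb_length. apply NoDup_incl_length; auto. intros x Hx. apply allb_in; auto. Qed.

Definition Tq (Q : (nat -> bool) -> Prop) (s : string) : Prop := exists Y, Q Y /\ init Y (length s) = s.
Definition NQ (Q : (nat -> bool) -> Prop) (m : nat) (s : string) : Prop := exists Y, Q Y /\ init Y m = s.

Lemma Tq_tree Q : is_tree (Tq Q).
Proof. intros s t [u ->] [Y [HY HYt]]. exists Y. split; auto. rewrite <- (firstn_init Y (length s) (length (s ++ u))).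
  rewrite HYt. rewrite firstn_app, Nat.sub_diag, firstn_all. simpl. apply app_nil_r. rewrite length_app; lia. Qed.

Lemma Tq_branching Q s : branching (Tq Q) s -> exists Y0 Y1, Q Y0 /\ Q Y1 /\ init Y0 (S (length s)) = s ++ [false] /\ init Y1 (S (length s)) = s ++ [true].
Proof. intros [[[Y0 [H0 E0]] _] [[Y1 [H1 E1]] _]]. rewrite length_app in E0, E1. simpl in *.
  rewrite Nat.add_1_r in E0, E1. exists Y0, Y1; auto. Qed.

Lemma Tq_branching_inv Q X Y m : Q X -> Q Y -> init X m = init Y m -> X m = false -> Y m = true -> branching (Tq Q) (init X m).
Proof.
  intros HX HY E HXm HYm.
  assert (PT : forall Z, Q Z -> path (Tq Q) Z). { intros Z HZ n. exists Z. rewrite init_length. auto. }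
  split.
  - rewrite <- HXm, <- init_S. apply path_extendible. auto.
  - rewrite E, <- HYm, <- init_S. apply path_extendible. auto.
Qed.

Lemma count_lower (Q : (nat -> bool) -> Prop) p : (exists Y, Q Y) ->
  principal_function (fun m => exists s, branching (Tq Q) s /\ length s = m) p ->
  forall m, exists l, NoDup l /\ (forall t, In t l -> NQ Q m t) /\ 1 <= length l /\ forall k, p k < m -> k + 2 <= length l.
Proof.
  intros [Y0 HY0] [Hinc HA]. induction m.
  - exists [[]]. split. constructor; auto; constructor. split. intros t [<-|[]]. exists Y0; auto.
    split; simpl; auto. intros; lia.
  - destruct IHm as (l & ND & Hin & L1 & Hk).
    assert (Hsp : forall t, exists Y, In t l -> Q Y /\ init Y m = t).
    { intro t. destruct (classic (In t l)) as [I|I]. destruct (Hin t I) as [Y HY]. eauto. exists Y0. tauto. }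
    set (ext := fun t => init (proj1_sig (constructive_indefinite_description _ (Hsp t))) (S m)).
    assert (Hext : forall t, In t l -> NQ Q (S m) (ext t) /\ firstn m (ext t) = t).
    { intros t I. unfold ext. destruct (constructive_indefinite_description _ _) as [Y HY]. simpl.
      destruct (HY I). split. exists Y; auto. rewrite firstn_init; auto. }
    assert (ND' : NoDup (map ext l)).
    { apply NoDup_map_on; auto. intros x y Ix Iy E. rewrite <- (proj2 (Hext x Ix)), <- (proj2 (Hext y Iy)), E. auto. }
    assert (Hin' : forall t, In t (map ext l) -> NQ Q (S m) t).
    { intros t It. apply in_map_iff in It. destruct It as (x & <- & Ix). apply Hext; auto. }
    destruct (classic (exists s, branching (Tq Q) s /\ length s = m)) as [Am|Am].
    + destruct Am as (s & Bs & Ls). destruct (Tq_branching Q s Bs) as (Z0 & Z1 & HZ0 & HZ1 & E0 & E1).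
      assert (exists z, ~ In z (map ext l) /\ NQ Q (S m) z) as [z [Hz1 Hz2]].
      { destruct (classic (In (s ++ [false]) (map ext l))) as [I0|I0].
        - destruct (classic (In (s ++ [true]) (map ext l))) as [I1|I1].
          + exfalso. apply in_map_iff in I0, I1. destruct I0 as (x0 & Ex0 & Ix0). destruct I1 as (x1 & Ex1 & Ix1).
            assert (x0 = s). { rewrite <- (proj2 (Hext x0 Ix0)), Ex0, <- Ls, firstn_app, Nat.sub_diag, firstn_all. simpl. apply app_nil_r. }
            assert (x1 = s). { rewrite <- (proj2 (Hext x1 Ix1)), Ex1, <- Ls, firstn_app, Nat.sub_diag, firstn_all. simpl. apply app_nil_r. }
            subst. rewrite Ex0 in Ex1. apply app_inv_head in Ex1. congruence.
          + exists (s ++ [true]). split; auto. exists Z1. rewrite <- Ls; auto.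
        - exists (s ++ [false]). split; auto. exists Z0. rewrite <- Ls; auto. }
      exists (z :: map ext l). split. constructor; auto. split. intros t [<-|It]; auto.
      split. simpl; lia. intros k Hk'. simpl. rewrite length_map.
      destruct (Nat.eq_dec (p k) m).
      * destruct k. lia. specialize (Hinc k). specialize (Hk k ltac:(lia)). lia.
      * specialize (Hk k ltac:(lia)). lia.
    + exists (map ext l). split; auto. split; auto. rewrite length_map. split; auto.
      intros k Hk'. destruct (Nat.eq_dec (p k) m). exfalso. apply Am. apply HA. eauto.
      apply Hk; lia.
Qed.
Lemma mono_of_strict (q : nat -> nat) : (forall n, q n < q (S n)) -> forall a b, a <= b -> q a <= q b.
Proof. intros H a b Hab. induction Hab. lia. specialize (H m). lia. Qed.
Lemma strict_lt (q : nat -> nat) : (forall n, q n < q (S n)) -> forall a b, q a < q b -> a < b.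
Proof. intros H a b Hab. destruct (Nat.lt_ge_cases a b); auto. pose proof (mono_of_strict q H b a H0). lia. Qed.
Lemma strict_ge (q : nat -> nat) : (forall n, q n < q (S n)) -> forall n, n <= q n.
Proof. intros H n. induction n. lia. specialize (H n). lia. Qed.

Lemma map_seq_eq (f g : nat -> bool) a j : map f (seq a j) = map g (seq a j) -> forall i, a <= i -> i < a + j -> f i = g i.
Proof. revert a; induction j; intros a H i H1 H2. lia. simpl in H. injection H as H3 H4.
  destruct (Nat.eq_dec i a). subst; auto. apply (IHj (S a)); auto; lia. Qed.

Lemma count_upper (P : (nat->bool)->Prop) (R : (nat->bool)->(nat->bool)->Prop) (p0 : nat -> nat) m M j :
  (forall n, p0 n < p0 (S n)) ->
  (forall X Y d, P X -> P Y -> (forall i, i < d -> X i = Y i) -> X d <> Y d -> exists i, p0 i = d) ->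
  (forall X X' Y Y', R X Y -> R X' Y' -> (forall i, i < M -> X i = X' i) -> forall n, n < m -> Y n = Y' n) ->
  m + M <= p0 j ->
  forall l, NoDup l -> (forall t, In t l -> NQ (fun Y => P Y \/ exists X, P X /\ R X Y) m t) -> length l <= 2 ^ S j.
Proof.
  intros Hp0 HD HR Hj l ND Hl.
  assert (Hsp : forall t, exists bX : bool * (nat -> bool), In t l -> P (snd bX) /\
     ((fst bX = true /\ init (snd bX) m = t) \/ (fst bX = false /\ exists Y, R (snd bX) Y /\ init Y m = t))).
  { intro t. destruct (classic (In t l)) as [I|I].
    - destruct (Hl t I) as (Y & [HY|(X & HX & HXY)] & HYt).
      + exists (true, Y). simpl. auto.
      + exists (false, X). simpl. intros _. split; auto. right. split; auto. exists Y; auto.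
    - exists (true, fun _ => true). tauto. }
  set (cd := fun t => let bX := proj1_sig (constructive_indefinite_description _ (Hsp t)) in
              fst bX :: map (fun i => snd bX (p0 i)) (seq 0 j)).
  apply Nat.le_trans with (length (map cd l)). rewrite length_map; auto.
  apply bound_bool_lists.
  - apply NoDup_map_on; auto. intros x y Ix Iy E. unfold cd in E.
    destruct (constructive_indefinite_description _ (Hsp x)) as [[b X] HX].
    destruct (constructive_indefinite_description _ (Hsp y)) as [[b' X'] HX']. simpl in *.
    injection E as Eb Em. subst b'. specialize (HX Ix). specialize (HX' Iy).
    assert (Ag : forall i, i < m + M -> X i = X' i).
    { apply NNPP. intro N. destruct (first_diff X X' _ N) as (d & Hd & Hb & Hne).
      destruct (HD X X' d (proj1 HX) (proj1 HX') Hb Hne) as [i Hi].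
      assert (i < j) by (apply (strict_lt p0 Hp0); lia).
      apply Hne. rewrite <- Hi. apply (map_seq_eq _ _ 0 j Em); lia. }
    destruct HX as [_ [[Hb Ex]|[Hb Ex]]]; destruct HX' as [_ [[Hb' Ey]|[Hb' Ey]]]; try congruence.
    + rewrite <- Ex, <- Ey. apply init_ext. intros; apply Ag; lia.
    + destruct Ex as (Y & RY & Ey1). destruct Ey as (Y' & RY' & Ey2). rewrite <- Ey1, <- Ey2.
      apply init_ext. apply (HR _ _ _ _ RY RY'). intros; apply Ag; lia.
  - intros x Hx. apply in_map_iff in Hx. destruct Hx as (t & <- & _). unfold cd. simpl. rewrite length_map, length_seq. auto.
Qed.

Definition sorX (X : nat -> bool) : nat -> option nat := fun i => Some (b2n (X i)).

Lemma run_init X c k n x : k <= n -> run k (so (init X n)) c x = run k (sorX X) c x.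
Proof. intro H. apply run_dep. intros i Hi. unfold so, sorX. rewrite init_length.
  replace (i <? n) with true by (symmetry; apply Nat.ltb_lt; lia). rewrite nth_init; auto; lia. Qed.
Lemma run_prefix s s' c k x : prefix s s' -> k <= length s -> run k (so s) c x = run k (so s') c x.
Proof. intros Hp H. apply run_dep. intros i Hi. unfold so. pose proof (prefix_length _ _ Hp).
  replace (i <? length s) with true by (symmetry; apply Nat.ltb_lt; lia).
  replace (i <? length s') with true by (symmetry; apply Nat.ltb_lt; lia). rewrite (prefix_nth s s'); auto; lia. Qed.

Definition Wt (TP : string -> Prop) (qq : nat -> nat) (c : code) (t : string) : Prop :=
  exists s, length s = qq (length t) /\ TP s /\ forall n, n < length t -> run (qq n) (so s) c n = Some (b2n (nth n t false)).
Definition Im (P : (nat -> bool) -> Prop) (qq : nat -> nat) (c : code) (Y : nat -> bool) : Prop :=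
  exists X, P X /\ forall n, run (qq n) (sorX X) c n = Some (b2n (Y n)).

Lemma Wt_tree TP qq c : is_tree TP -> (forall n, qq n < qq (S n)) -> is_tree (Wt TP qq c).
Proof.
  intros HT Hq t t' [u ->] (s & Ls & Ts & Hs).
  exists (firstn (qq (length t)) s). rewrite length_app in Ls.
  pose proof (mono_of_strict qq Hq (length t) (length t + length u) ltac:(lia)).
  split. rewrite length_firstn. lia. split. apply (HT _ s); auto. apply prefix_firstn.
  intros n Hn. rewrite (run_prefix _ s). rewrite Hs by (rewrite length_app; lia). rewrite app_nth1; auto.
  apply prefix_firstn. rewrite length_firstn. pose proof (mono_of_strict qq Hq n (length t) ltac:(lia)). lia.
Qed.

Lemma Im_path (P : (nat -> bool) -> Prop) TP qq c Y : (forall X, P X <-> path TP X) -> (forall n, qq n < qq (S n)) ->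
  Im P qq c Y -> path (Wt TP qq c) Y.
Proof.
  intros HP Hq (X & HX & HR) n. exists (init X (qq (length (init Y n)))).
  split. apply init_length. split. apply HP; auto.
  intros m Hm. rewrite init_length in *. rewrite run_init. rewrite HR, nth_init; auto. apply mono_of_strict; auto; lia.
Qed.

Lemma path_Im (P : (nat -> bool) -> Prop) TP qq c Y : is_tree TP -> (forall X, P X <-> path TP X) -> (forall n, qq n < qq (S n)) ->
  path (Wt TP qq c) Y -> Im P qq c Y.
Proof.
  intros HT HP Hq HY.
  set (V := fun s => TP s /\ forall n, qq n < length s -> run (qq n) (so s) c n = Some (b2n (Y n))).
  assert (HV : is_tree V).
  { intros s t Hst [Tt Ht]. split. apply (HT _ t); auto. intros n Hn. rewrite (run_prefix s t); auto; try lia.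
    apply Ht. pose proof (prefix_length _ _ Hst). lia. }
  assert (Hin : forall n, exists s, V s /\ length s = qq n).
  { intro n. destruct (HY n) as (s & Ls & Ts & Hs). rewrite init_length in Ls. exists s. split; auto. split; auto.
    intros m Hm. rewrite Ls in Hm. apply (strict_lt qq Hq) in Hm. rewrite Hs; [|rewrite init_length; auto].
    rewrite nth_init; auto. }
  assert (Hext : extendible V []).
  { split. destruct (Hin 0) as (s & Vs & _). apply (HV _ s); auto. exists s; auto.
    intro l. destruct (Hin (S (list_sum (map (@length bool) l)))) as (s & Vs & Ls). exists s. split; auto.
    split. exists s; auto. intro I. apply in_len_sum in I. pose proof (strict_ge qq Hq (S (list_sum (map (@length bool) l)))).
    lia. }
  destruct (koenig V [] HV Hext) as (X & HX & _).
  exists X. split. apply HP. intro n. apply (HX n).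
  intro n. destruct (HX (S (qq n))) as [_ H]. rewrite <- (run_init X c (qq n) (S (qq n))) by lia.
  apply H. rewrite init_length. lia.
Qed.
Lemma scode_surj m : exists s, scode s = m.
Proof.
  induction m as [m IH] using lt_wf_ind. destruct m as [|m]. exists []; auto.
  destruct (dp_inv m) as [E L]. destruct (IH (hv m) ltac:(lia)) as [s Hs].
  destruct (od m) as [|[|k]] eqn:Eo; try lia.
  - exists (false :: s). cbn [scode]. lia.
  - exists (true :: s). cbn [scode]. lia.
Qed.

Lemma eqn_ne0 a b : eqn a b <> 0 <-> a = b.
Proof. rewrite eqn_spec. destruct (a =? b) eqn:E. apply Nat.eqb_eq in E. split; auto. apply Nat.eqb_neq in E. split; congruence. Qed.

Definition Inner (qq : nat -> nat) (c : code) (w n : nat) : nat :=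
  eqn (Erun orcN c (cpair (qq n) (p2 w)) n) (S (sbit (p1 w) n)).
Definition Wb FP qq c (t m : nat) : nat :=
  eqn (slen m) (qq (slen t)) * eqn (FP m) 1 * prodr (Inner qq c) (cpair t m) (slen t).
Definition FQ FP qq c (t : nat) : nat :=
  ite (sumr (Wb FP qq c) t (pow2 (S (qq (slen t)))) + eqn (FP t) 1) 0 1.

Lemma Erun_so c k s n : Erun orcN c (cpair k (scode s)) n = enc (run k (so s) c n).
Proof. unfold Erun. rewrite p1_c, p2_c. f_equal. apply run_dep. intros; apply orcN_scode. Qed.

Lemma mul_ne0 a b : a * b <> 0 <-> a <> 0 /\ b <> 0.
Proof. rewrite Nat.mul_eq_0. tauto. Qed.

Lemma Wb_spec TP FP qq c t s : (forall s, TP s <-> FP (scode s) = 1) ->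
  Wb FP qq c (scode t) (scode s) <> 0 <->
  length s = qq (length t) /\ TP s /\ forall n, n < length t -> run (qq n) (so s) c n = Some (b2n (nth n t false)).
Proof.
  intro HTP. unfold Wb. rewrite !mul_ne0, prodr_spec, !slen_scode, HTP, !eqn_ne0.
  assert (HI : forall n, Inner qq c (cpair (scode t) (scode s)) n <> 0 <-> run (qq n) (so s) c n = Some (b2n (nth n t false))).
  { intro n. unfold Inner. rewrite eqn_ne0, p1_c, p2_c, Erun_so, sbit_scode.
    destruct (run _ _ _ _); simpl; split; congruence. }
  split.
  - intros [[H1 H2] H3]. split; auto. split; auto. intros n Hn. apply HI; auto.
  - intros (H1 & H2 & H3). split; auto. intros n Hn. apply HI; auto.
Qed.

Lemma FQ_spec TP FP qq c t : (forall s, TP s <-> FP (scode s) = 1) ->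
  (Wt TP qq c t \/ TP t) <-> FQ FP qq c (scode t) = 1.
Proof.
  intro HTP. unfold FQ.
  assert (E : forall v, ite v 0 1 = 1 <-> v <> 0). { intros [|v]; simpl; split; congruence. }
  rewrite E. rewrite Nat.eq_add_0. rewrite HTP.
  assert (HW : Wt TP qq c t <-> sumr (Wb FP qq c) (scode t) (pow2 (S (qq (slen (scode t))))) <> 0).
  { rewrite sumr_spec, slen_scode, pow2_spec. split.
    - intros (s & Ls & Ts & Hs). exists (scode s). split. rewrite <- Ls. apply scode_lt.
      apply (Wb_spec TP); auto.
    - intros (m & Hm & Hw). destruct (scode_surj m) as [s <-]. apply (Wb_spec TP) in Hw; auto. exists s; auto. }
  rewrite HW. rewrite <- (eqn_ne0 (FP (scode t)) 1). split.
  - intros [H|H] [H1 H2]; auto.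
  - intro H. destruct (Nat.eq_dec (sumr (Wb FP qq c) (scode t) (pow2 (S (qq (slen (scode t)))))) 0); auto.
Qed.

Lemma FQ_comp f FP qq c : C f FP -> C f qq -> C f (FQ FP qq c).
Proof.
  intros HFP Hqq.
  assert (K1 f FP) by exact HFP. assert (K1 f qq) by exact Hqq.
  assert (K2 f (Erun orcN c)) by (apply C_run; exact _).
  assert (K2 f (Inner qq c)) by (unfold K2, C2, Inner; ctac).
  assert (K2 f (prodr (Inner qq c))) by (apply K2_prodr; auto).
  assert (K2 f (Wb FP qq c)) by (unfold K2, C2, Wb; ctac).
  assert (K2 f (sumr (Wb FP qq c))) by (apply K2_sumr; auto).
  unfold FQ. ctac.
Qed.
Lemma sumr_ge F x b n : n < b -> F x n <= sumr F x b.
Proof. induction b; intro H. lia. change (sumr F x (S b)) with (sumr F x b + F x b).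
  destruct (Nat.eq_dec n b). subst; lia. specialize (IHb ltac:(lia)). lia. Qed.

Lemma b2n_inj a b : b2n a = b2n b -> a = b.
Proof. destruct a, b; simpl; congruence. Qed.

Definition ORCh (h : nat -> bool) (u i : nat) : option nat := Some (chi h i).

Theorem mainTheorem5 (f : nat -> nat) (h : nat -> bool) (P : (nat -> bool) -> Prop) :
  hyperimmune_free h -> Pi01_class f P -> very_small P -> P h ->
  forall h' : nat -> bool, Turing_le h' h ->
    hyperimmune_free h' /\
    exists Q : (nat -> bool) -> Prop, Pi01_class f Q /\ very_small Q /\ Q h'.
Proof.
  intros HIF [TP [HTPtree [[FP [HFP HFPs]] HPpath]]] [T0 [p0 [HT0 [HP0 [[Hp0inc Hp0A] Hp0dom]]]]] Ph h' [c Hc].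
  split.
  { intros g Hg. apply HIF. unfold fun_le_T in *. apply (C_trans (chi h')); auto. exists c; auto. }
  assert (Hgh : forall n, exists k, run k (sor (chi h)) c n = Some (chi h' n) /\
                  forall k', run k' (sor (chi h)) c n = Some (chi h' n) -> k <= k').
  { intro n. apply least_ex. apply run_complete. apply Hc. }
  set (gh := fun n => proj1_sig (constructive_indefinite_description _ (Hgh n))).
  assert (Hgh1 : forall n, run (gh n) (sor (chi h)) c n = Some (chi h' n) /\
                  forall k', run k' (sor (chi h)) c n = Some (chi h' n) -> gh n <= k').
  { intro n. unfold gh. destruct (constructive_indefinite_description _ _). simpl. auto. }
  assert (Cgh : fun_le_T gh h).
  { unfold fun_le_T.
    assert (K1 (chi h) (chi h')) by (exists c; auto).
    assert (K2 (chi h) (encO (ORCh h))).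
    { unfold K2, C2. eapply C_ext. intro z. instantiate (1 := fun z => S (chi h (p2 z))). reflexivity. ctac. }
    assert (K2 (chi h) (Erun (ORCh h) c)) by (apply C_run; auto).
    assert (ER : forall n k, Erun (ORCh h) c (cpair k 0) n = enc (run k (sor (chi h)) c n)).
    { intros n k. unfold Erun. rewrite p1_c, p2_c. reflexivity. }
    apply (C_mu (chi h) (fun n k => 1 - eqn (Erun (ORCh h) c (cpair k 0) n) (S (chi h' n)))).
    - unfold C2. ctac.
    - intro n. destruct (Hgh1 n) as [G1 G2]. split.
      + rewrite ER, eqn_spec, G1. simpl. rewrite Nat.eqb_refl. reflexivity.
      + intros m Hm. rewrite ER, eqn_spec.
        destruct (enc (run m (sor (chi h)) c n) =? S (chi h' n)) eqn:E; [|simpl; lia].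
        apply Nat.eqb_eq in E. destruct (run m (sor (chi h)) c n) eqn:E2; simpl in E; [|lia].
        injection E as E. subst. specialize (G2 m E2). lia. }
  destruct (HIF gh Cgh) as [q [Cq [N HN]]].
  set (Cst := sumr (fun _ i => gh i) 0 N).
  set (qq := fun n => sumr (fun _ i => S (q i + Cst)) 0 (S n)).
  assert (Hqq : forall n, qq n < qq (S n)).
  { intro n. unfold qq. change (sumr (fun _ i => S (q i + Cst)) 0 (S (S n))) with
      (sumr (fun _ i => S (q i + Cst)) 0 (S n) + S (q (S n) + Cst)). lia. }
  assert (Hghq : forall n, gh n <= qq n).
  { intro n. assert (gh n <= q n + Cst).
    { destruct (Nat.lt_ge_cases n N). pose proof (sumr_ge (fun _ i => gh i) 0 N n H). unfold Cst; simpl in *; lia.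
      specialize (HN n H). lia. }
    pose proof (sumr_ge (fun _ i => S (q i + Cst)) 0 (S n) n ltac:(lia)). unfold qq; simpl in *; lia. }
  assert (Cqq : forall o, C o qq).
  { intro o. assert (K1 o q) by (apply C_from_computable; auto).
    assert (K2 o (sumr (fun _ i => S (q i + Cst)))) by (apply K2_sumr; unfold K2, C2; ctac).
    unfold qq. ctac. }
  assert (Hh' : Im P qq c h').
  { exists h. split; auto. intro n. destruct (Hgh1 n) as [H1 _].
    change (sorX h) with (sor (chi h)). eapply run_mono; eauto. apply osub_refl. }
  set (R := fun X Y => forall n, run (qq n) (sorX X) c n = Some (b2n (Y n))).
  set (Q := fun Y => P Y \/ exists X, P X /\ R X Y).
  set (TQ := fun t => Wt TP qq c t \/ TP t).
  assert (HQp : forall Y, Q Y <-> path TQ Y).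
  { intro Y. split.
    - intros [HY|HY] n. right. apply HPpath; auto. left. apply (Im_path P TP qq c Y); auto.
    - intro HY. destruct (classic (forall n, TP (init Y n))) as [A|A]. left. apply HPpath. exact A.
      right. apply not_all_ex_not in A. destruct A as [n0 Hn0]. apply (path_Im P TP qq c Y); auto.
      intro n. destruct (HY (Nat.max n n0)) as [W|W].
      + apply (Wt_tree TP qq c HTPtree Hqq _ (init Y (Nat.max n n0))); auto. apply prefix_init. lia.
      + exfalso. apply Hn0. apply (HTPtree _ (init Y (Nat.max n n0))); auto. apply prefix_init. lia. }
  exists Q. split; [|split].
  -
    exists TQ. split; [|split].
    + intros s t Hst [W|W]. left. apply (Wt_tree TP qq c HTPtree Hqq s t); auto. right. apply (HTPtree s t); auto.
    + exists (FQ FP qq c). split. apply FQ_comp; auto. intro s. apply FQ_spec. auto.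
    + exact HQp.
  -
    assert (HD : forall X Y d, P X -> P Y -> (forall i, i < d -> X i = Y i) -> X d <> Y d -> exists i, p0 i = d).
    { intros X Y d HX HY Hag Hne. apply Hp0A. exists (init X d). split; [|apply init_length].
      assert (EI : init X d = init Y d) by (apply init_ext; auto).
      assert (BX := path_extendible T0 X (S d) (proj1 (HP0 X) HX)).
      assert (BY := path_extendible T0 Y (S d) (proj1 (HP0 Y) HY)).
      rewrite init_S in BX, BY. rewrite <- EI in BY.
      destruct (X d) eqn:EX; destruct (Y d) eqn:EY; try congruence; split; auto. }
    assert (Hinf : forall M, exists m, M <= m /\ exists s, branching (Tq Q) s /\ length s = m).
    { intro M. exists (p0 M). split. apply strict_ge; auto.
      destruct (proj2 (Hp0A (p0 M)) (ex_intro _ M eq_refl)) as (s & [B0 B1] & Ls).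
      destruct (koenig T0 _ HT0 B0) as (X0 & PX0 & EX0). destruct (koenig T0 _ HT0 B1) as (X1 & PX1 & EX1).
      rewrite length_app in EX0, EX1. simpl in EX0, EX1. rewrite Nat.add_1_r, init_S in EX0, EX1.
      apply app_inj_tail in EX0. apply app_inj_tail in EX1. destruct EX0 as [E0 F0]. destruct EX1 as [E1 F1].
      exists (init X0 (length s)). split. apply (Tq_branching_inv Q X0 X1). left; apply HP0; auto. left; apply HP0; auto.
      congruence. auto. auto. rewrite init_length; auto. }
    destruct (principal_exists _ Hinf) as [p Hp].
    exists (Tq Q), p. split; [apply Tq_tree|]. split.
    { intro X. split. intros HX n. exists X. rewrite init_length. auto.
      intro HX. apply HQp. intro n. destruct (HX n) as (Y & HY & EY). rewrite init_length in EY. rewrite <- EY.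
      apply HQp; auto. }
    split; auto.
    intros g2 Hg2.
    set (G := fun j => maxr (fun _ n => g2 n + qq (g2 n)) 0 (pow2 (j + 3))).
    assert (CG : computable G).
    { unfold computable. assert (K1 (fun _ => 0) g2) by exact Hg2. assert (K1 (fun _ => 0) qq) by apply Cqq.
      assert (K2 (fun _ => 0) (maxr (fun _ n => g2 n + qq (g2 n)))) by (apply K2_maxr; unfold K2, C2; ctac).
      unfold G. ctac. }
    destruct (Hp0dom G CG) as [J HJ].
    exists (2 ^ (J + 2)). intros n Hn. destruct (Nat.le_gt_cases (g2 n) (p n)) as [Hle|Hlt]; [exact Hle|exfalso].
    set (m := g2 n).
    destruct (count_lower Q p (ex_intro _ h (or_introl Ph)) Hp m) as (l & ND & Hl & _ & Hk).
    specialize (Hk n Hlt).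
    set (e := Nat.log2 (n + 2)).
    destruct (Nat.log2_spec (n + 2) ltac:(lia)) as [Le1 Le2]. fold e in Le1, Le2.
    assert (He : J + 2 <= e).
    { destruct (Nat.le_gt_cases (J + 2) e); auto. assert (2 ^ S e <= 2 ^ (J + 2)) by (apply Nat.pow_le_mono_r; lia). lia. }
    assert (Hj : m + qq m <= p0 (e - 2)).
    { apply Nat.le_trans with (G (e - 2)); [|apply HJ; lia]. unfold G.
      apply (maxr_spec (fun _ n => g2 n + qq (g2 n)) 0 (pow2 (e - 2 + 3)) n). rewrite pow2_spec.
      replace (e - 2 + 3) with (S e) by lia. lia. }
    assert (HR : forall X X' Y Y', R X Y -> R X' Y' -> (forall i, i < qq m -> X i = X' i) -> forall k, k < m -> Y k = Y' k).
    { intros X X' Y Y' RX RX' Ag k Hk'. apply b2n_inj. specialize (RX k). specialize (RX' k).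
      rewrite (run_dep _ _ _ (sorX X')) in RX. congruence. intros i Hi. unfold sorX. rewrite Ag; auto.
      pose proof (mono_of_strict qq Hqq k m ltac:(lia)). lia. }
    pose proof (count_upper P R p0 m (qq m) (e - 2) Hp0inc HD HR Hj l ND Hl).
    replace (S (e - 2)) with (e - 1) in H by lia.
    replace e with (S (e - 1)) in Le1 by lia. rewrite Nat.pow_succ_r' in Le1.
    pose proof (Nat.pow_nonzero 2 (e - 1) ltac:(lia)). lia.
  - right. exact Hh'.
Qed.
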